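(* For all integers $n_1,n_2\ge0$, \[ \zeta(-2n_1-1,0,-2n_2-1|1)=-\zeta(-2n_1-1,-2n_2-1|1). \]
   Context: Normalized multiple Bernoulli polynomials: for integers $k\ge0$, $\zeta(-k|z)=-\frac{B_{k+1}(z)}{k+1}$ ($B_n(z)$ the Bernoulli polynomials, $B_n=B_n(0)$), and for $r\ge2$, $k_j\ge0$, $\zeta(-k_1,\ldots,-k_r|z)=-\frac{1}{k_r+1}\zeta(-k_1,\ldots,-k_{r-2},-k_{r-1}-k_r-1|z)-\frac12\zeta(-k_1,\ldots,-k_{r-2},-k_{r-1}-k_r|z)+\sum_{q=1}^{k_r}(-k_r)_q\frac{B_{q+1}}{(q+1)!}\zeta(-k_1,\ldots,-k_{r-2},-k_{r-1}-k_r+q|z)$, with $(a)_q=a(a+1)\cdots(a+q-1)$. *)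

(* Defs.v *)
From mathcomp Require Import all_boot all_order all_algebra.
Set Implicit Arguments. Unset Strict Implicit. Unset Printing Implicit Defensive.
Import Order.TTheory GRing.Theory Num.Theory.
Local Open Scope ring_scope.

Section MultiBernoulli.
Variable R : numFieldType.

(* bern_seq n = [:: B_0; ...; B_n], Bernoulli numbers with B_1 = -1/2,
   defined by B_0 = 1 and sum_{k=0}^{n} C(n+1,k) B_k = 0 for n >= 1. *)
Fixpoint bern_seq (n : nat) : seq R :=
  match n with
  | 0 => [:: 1]
  | n'.+1 => let s := bern_seq n' in
      rcons s (- (n'.+2%:R)^-1 * \sum_(k < n'.+1) 'C(n'.+2, k)%:R * s`_k)
  end.

Definition bernoulli (n : nat) : R := (bern_seq n)`_n.

Definition bernoulli_poly (n : nat) (z : R) : R :=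
  \sum_(k < n.+1) 'C(n, k)%:R * bernoulli k * z ^+ (n - k).

Definition pochhammer (a : R) (q : nat) : R := \prod_(i < q) (a + i%:R).

(* mzeta_rev z rest k = zeta(-k_1,...,-k_{r-1},-k | z) where
   rest = [:: k_{r-1}; ...; k_1] (reversed prefix). *)
Fixpoint mzeta_rev (z : R) (rest : seq nat) (k : nat) : R :=
  match rest with
  | [::] => - bernoulli_poly k.+1 z / k.+1%:R
  | k' :: rest' =>
      - (k.+1%:R)^-1 * mzeta_rev z rest' (k' + k).+1
      - 2^-1 * mzeta_rev z rest' (k' + k)
      + \sum_(1 <= q < k.+1)
          pochhammer (- k%:R) q * bernoulli q.+1 / (q.+1)`!%:R
            * mzeta_rev z rest' (k' + k - q)
  end.

End MultiBernoulli.

(* mzeta [:: k_1; ...; k_r] z = zeta(-k_1, ..., -k_r | z)  (r >= 1);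
   the empty list (r = 0) is given the junk value 0. *)
Definition mzeta (R : numFieldType) (ks : seq nat) (z : R) : R :=
  match rev ks with
  | [::] => 0
  | k :: rest => mzeta_rev z rest k
  end.

(* Main.v *)
Require Import Defs.
From mathcomp Require Import all_boot all_order all_algebra.
From mathcomp Require Import ring lra zify.
Set Implicit Arguments. Unset Strict Implicit. Unset Printing Implicit Defensive.
Import Order.TTheory GRing.Theory Num.Theory.
Local Open Scope ring_scope.

Lemma binL m j k : (k <= j)%N -> (j <= m)%N ->
  ('C(m, j) * 'C(j, k) = 'C(m, k) * 'C(m - k, j - k))%N.
Proof.
move=> kj jm.
have P : (0 < k`! * (j - k)`! * (m - j)`!)%N by rewrite !muln_gt0 !fact_gt0.
apply/eqP; rewrite -(eqn_pmul2r P); apply/eqP.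
have e1 : ('C(m, j) * 'C(j, k) * (k`! * (j - k)`! * (m - j)`!) = m`!)%N.
  by rewrite -[in RHS](bin_fact jm) -[in RHS](bin_fact kj) mulnA; ring.
have e2 : ('C(m, k) * 'C(m - k, j - k) * (k`! * (j - k)`! * (m - j)`!) = m`!)%N.
  have km : (k <= m)%N by apply: leq_trans jm.
  have jk : (j - k <= m - k)%N by apply: leq_sub2r.
  have -> : (m - j = (m - k) - (j - k))%N by rewrite subnBA // subnK.
  rewrite -[in RHS](bin_fact km) -[in RHS](bin_fact jk). ring.
by rewrite e1 e2.
Qed.

Section S.
Variable R : numFieldType.
Local Notation B := (@bernoulli R).

Lemma size_bern n : size (bern_seq R n) = n.+1.
Proof. by elim: n => //= n IH; rewrite size_rcons IH. Qed.

Lemma nth_bern n k : (k <= n)%N -> (bern_seq R n)`_k = B k.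
Proof.
move=> kn; rewrite /bernoulli -(subnKC kn).
elim: (n - k)%N => [|d IH]; first by rewrite addn0.
by rewrite addnS /= nth_rcons size_bern ltnS leq_addr IH.
Qed.

Lemma bernS n : B n.+1 =
  - (n.+2%:R)^-1 * \sum_(k < n.+1) 'C(n.+2, k)%:R * B k.
Proof.
rewrite {1}/bernoulli /= nth_rcons size_bern ltnn eqxx.
congr (_ * _); apply: eq_bigr => i _; rewrite nth_bern //; exact: ltnSE (ltn_ord i).
Qed.

Lemma bern_rec n : \sum_(k < n.+3) 'C(n.+2, k)%:R * B k = B n.+2.
Proof.
rewrite big_ord_recr /= binn mul1r.
have -> : \sum_(i < n.+2) 'C(n.+2, i)%:R * B i = 0.
  rewrite big_ord_recr /= binSn.
  rewrite (bernS n) mulrA mulrN mulfV ?pnatr_eq0 //. by rewrite mulN1r addrN.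
by rewrite add0r.
Qed.

Lemma bern0 : B 0 = 1. Proof. by []. Qed.
Lemma bern1 : B 1 = - 2^-1.
Proof. by rewrite bernS big_ord1 bin0 /bernoulli /= mul1r mulr1. Qed.



Lemma widen_bin j n (F : nat -> R) : (j <= n)%N ->
  \sum_(k < j.+1) 'C(j, k)%:R * F k = \sum_(k < n.+1) 'C(j, k)%:R * F k.
Proof.
move=> jn; rewrite (big_ord_widen n.+1 (fun k => 'C(j, k)%:R * F k)) //.
rewrite big_mkcond; apply: eq_bigr => i _; case: ifP => // /negbT.
by rewrite -leqNgt => h; rewrite bin_small ?mul0r.
Qed.

Lemma alt_inner m k : (k <= m)%N ->
  \sum_(j < m.+1) ('C(m, j) * 'C(j, k))%:R * (-1) ^+ j = (-1) ^+ k * (m == k)%:R :> R.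
Proof.
move=> km; rewrite -(big_mkord xpredT (fun j => ('C(m, j) * 'C(j, k))%:R * (-1) ^+ j : R)) (big_cat_nat _ (n:=k)) //=; last by rewrite ltnW.
rewrite big_nat big1 ?add0r; last first.
  by move=> i /andP [_ ik]; rewrite (bin_small ik) muln0 mul0r.
rewrite -{1}[k]add0n big_addn.
have e : forall i, ('C(m, i + k) * 'C(i + k, k) = 'C(m,k) * 'C(m - k, i))%N.
  move=> i; case: (leqP (i + k) m) => h.
    by rewrite binL ?leq_addl // addnK.
  rewrite bin_small // mul0n [X in (_ * X)%N]bin_small ?muln0 //.
  lia.
under eq_bigr => i _ do rewrite e natrM addnC exprD mulrACA.
rewrite -mulr_sumr subSn // big_mkord.
have -> : \sum_(i < (m - k).+1) 'C(m - k, i)%:R * (-1) ^+ i = (0 : R) ^+ (m - k).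
  rewrite -[in RHS](addrN (1 : R)) exprDn; apply: eq_bigr => i _.
  by rewrite expr1n mul1r mulr_natl.
rewrite expr0n; have [->|mk] := eqVneq m k.
  by rewrite subnn binn mul1r.
have -> : (m - k == 0)%N = false by apply/eqP; move/eqP: mk; lia.
by rewrite !mulr0.
Qed.


Lemma binv (x : nat -> R) m :
  \sum_(j < m.+1) 'C(m, j)%:R * (-1) ^+ j * (\sum_(k < j.+1) 'C(j, k)%:R * x k)
  = (-1) ^+ m * x m.
Proof.
under eq_bigr => j _ do rewrite (widen_bin _ (leq_ord j)) mulr_sumr.
rewrite exchange_big /=.
have H : forall k : 'I_m.+1, \sum_(j < m.+1) 'C(m, j)%:R * (-1) ^+ j * ('C(j, k)%:R * x k)
   = x k * ((-1) ^+ k * (m == k)%:R).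
  move=> k; rewrite -alt_inner ?leq_ord // mulr_sumr; apply: eq_bigr => j _.
  rewrite natrM; ring.
under eq_bigr => k _ do rewrite H.
rewrite big_ord_recr /= eqxx big1 ?add0r; first by rewrite mulr1 mulrC.
move=> k _; have /negbTE -> : m != k by rewrite neq_ltn ltn_ord orbT.
by rewrite !mulr0.
Qed.


Lemma sum_eq1 m (F : nat -> R) : (1 < m)%N -> \sum_(j < m) F j * (j == 1%N :> nat)%:R = F 1.
Proof.
case: m => [|[|m]] // _; rewrite 2!big_ord_recl big1 /=.
  by rewrite mulr0 mulr1 add0r addr0.
by move=> i _; rewrite mulr0.
Qed.

Lemma bern_pos m : \sum_(k < m.+1) 'C(m, k)%:R * B k = B m + (m == 1%N)%:R.
Proof.
case: m => [|[|n]].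
- by rewrite big_ord1 bin0 mul1r addr0.
- by rewrite big_ord_recr big_ord1 /= bin0 binn !mul1r bern0 addrC.
- by rewrite bern_rec addr0.
Qed.

Lemma bern_alt m : \sum_(j < m.+1) 'C(m, j)%:R * (-1) ^+ j * B j = (-1) ^+ m * B m + m%:R.
Proof.
have := binv B m; under eq_bigr => j _ do rewrite bern_pos mulrDr.
rewrite big_split /= => <-.
have -> : \sum_(i < m.+1) 'C(m, i)%:R * (-1) ^+ i * (i == 1%N :> nat)%:R = - m%:R :> R.
  case: m => [|m]; first by rewrite big_ord1 mulr0 oppr0.
  by rewrite (sum_eq1 (fun i => 'C(m.+1, i)%:R * (-1) ^+ i)) // bin1 expr1 mulrN1.
by rewrite subrK.
Qed.


Lemma bern_sym n : (2 <= n)%N -> (-1) ^+ n * B n = B n.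
Proof.
elim/ltn_ind: n => n IH n2.
pose E k := (-1) ^+ k * B k - B k.
have HE : forall j, (j < n)%N -> E j = (j == 1%N :> nat)%:R.
  move=> j; case: j => [|[|j]] jn.
  - by rewrite /E expr0 mul1r subrr.
  - by rewrite /E expr1 bern1 mulN1r !opprK /= -mulr2n -(mulr_natr (2^-1 : R) 2) mulVf // pnatr_eq0.
  - by rewrite /E /= IH ?subrr.
have S0 : \sum_(j < n.+2) 'C(n.+1, j)%:R * E j = E n.+1 + n.+1%:R.
  rewrite /E; under eq_bigr => j _ do rewrite mulrBr mulrA.
  rewrite sumrB bern_alt bern_pos /= eqSS (_ : (n == 0%N) = false) ?addr0 1?addrAC //; by case: (n) n2.
move: S0; rewrite big_ord_recr /= binn mul1r addrC => /addrI.
rewrite big_ord_recr /= binSn.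
have -> : \sum_(i < n) 'C(n.+1, i)%:R * E i = n.+1%:R.
  rewrite (eq_bigr (fun i : 'I_n => 'C(n.+1, i)%:R * (i == 1%N :> nat)%:R)).
    by rewrite (sum_eq1 (fun i => 'C(n.+1, i)%:R)) // bin1.
  by move=> i _; rewrite HE.
move/(congr1 (fun x => x - n.+1%:R)); rewrite /= addrC addrK subrr => /eqP.
by rewrite mulf_eq0 pnatr_eq0 /= /E subr_eq0 => /eqP.
Qed.

Lemma bern_odd n : B (n.*2.+3) = 0.
Proof.
have := bern_sym (n:=n.*2.+3) isT.
rewrite -signr_odd /= odd_double /= mulN1r => /eqP.
rewrite eq_sym -addr_eq0 -mulr2n mulrn_eq0 /= => /eqP //.
Qed.

Lemma bump0n i : bump 0 i = i.+1. Proof. by []. Qed.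

Lemma poch_neg k q : pochhammer (- k%:R : R) q = (-1) ^+ q * (k ^_ q)%:R.
Proof.
elim: q => [|q IH]; first by rewrite /pochhammer big_ord0 expr0 mul1r.
rewrite /pochhammer big_ord_recr /= -/(pochhammer _ _) IH ffactnSr.
case: (leqP q k) => qk.
  by rewrite natrM natrB // exprS; ring.
by rewrite ffact_small // !mulr0 mul0r.
Qed.

Lemma Top (z : R) k' rest k :
  mzeta_rev z (k' :: rest) k = - (k.+1%:R)^-1 *
    \sum_(j < k.+2) 'C(k.+1, j)%:R * (-1) ^+ j * B j * mzeta_rev z rest ((k' + k).+1 - j).
Proof.
set g := mzeta_rev z rest.
rewrite /= -/g 2!big_ord_recl /bump /= big_add1 /= big_mkord.
have -> : \sum_(i < k) pochhammer (- k%:R) i.+1 * B i.+2 / (i.+2)`!%:R * g (k' + k - i.+1)%N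
   = - k.+1%:R^-1 * \sum_(i < k) 'C(k.+1, i.+2)%:R * (-1) ^+ i.+2 * B i.+2 * g ((k' + k).+1 - i.+2)%N.
  rewrite mulr_sumr; apply: eq_bigr => i _; rewrite poch_neg subSS.
  have hf : ('C(k.+1, i.+2) * (i.+2)`! = k.+1 * k ^_ i.+1)%N by rewrite bin_ffact ffactSS.
  have hf' : 'C(k.+1, i.+2)%:R = (k.+1 * k ^_ i.+1)%:R / (i.+2)`!%:R :> R.
    by rewrite -hf natrM mulfK // pnatr_eq0 -lt0n fact_gt0.
  rewrite hf' natrM !exprS; field.
  by rewrite pnatr_eq0 -lt0n fact_gt0 /= addrC natr1 pnatr_eq0.
rewrite !bump0n bin0 bin1 expr0 expr1 subn0 subn1 /= bern0 bern1; field.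
by rewrite addrC natr1 pnatr_eq0.
Qed.

Lemma bern_odd' n : odd n -> (1 < n)%N -> B n = 0.
Proof.
move=> on n1; have := bern_sym n1.
rewrite -signr_odd on expr1 mulN1r => /eqP.
by rewrite eq_sym -addr_eq0 -mulr2n mulrn_eq0 /= => /eqP.
Qed.

Definition Y n := mzeta_rev (1 : R) [::] n.

Lemma Yeven n : ~~ odd n -> (0 < n)%N -> Y n = 0.
Proof.
move=> en n0; rewrite /Y /= /bernoulli_poly.
under eq_bigr => i _ do rewrite expr1n mulr1.
rewrite bern_pos bern_odd' //=.
by rewrite eqSS (_ : (n == 0%N) = false) ?add0r ?oppr0 ?mul0r //; case: (n) n0.
Qed.

Definition G a N j i := ('C(N, j) * 'C(N - j, i))%:R * (B j * ((-1) ^+ i * B i)) * Y (a + (N - j - i)).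

Lemma multi N i j : ('C(N, j) * 'C(N - j, i) = 'C(N, i) * 'C(N - i, j))%N.
Proof.
case: (leqP (i + j) N) => h.
  have e1 := binL (m := N) (j := i + j) (k := j) (leq_addl _ _) h.
  have e2 := binL (m := N) (j := i + j) (k := i) (leq_addr _ _) h.
  rewrite addnK in e1; rewrite addKn in e2.
  by rewrite -e1 -e2 -(bin_sub (leq_addl i j)) addnK.
case: (leqP j N) => hj.
  rewrite (bin_small (n := N - j) (m := i)) ?muln0; last by lia.
  case: (leqP i N) => hi.
    by rewrite (bin_small (n := N - i) (m := j)) ?muln0 //; lia.
  by rewrite (bin_small hi).
rewrite (bin_small hj) mul0n.
case: (leqP i N) => hi.
  by rewrite (bin_small (n := N - i) (m := j)) ?muln0 //; lia.
by rewrite (bin_small hi).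
Qed.

Lemma Gpair a N (j i : 'I_N.+1) : odd a -> odd N -> G a N j i + G a N i j = 0.
Proof.
move=> oa oN.
have -> : G a N j i + G a N i j = ('C(N, j) * 'C(N - j, i))%:R * (B i * B j) *
    ((-1) ^+ i + (-1) ^+ j) * Y (a + (N - j - i)).
  by rewrite /G multi subnAC; ring.
case: (boolP (odd (i + j))) => hp.
  rewrite -(signr_odd _ i) -(signr_odd _ j); move: hp; rewrite oddD.
  by case: (odd i); case: (odd j) => //= _; rewrite expr0 expr1 ?addrN ?addNr mulr0 mul0r.
case: (leqP (i + j) N) => hle.
  rewrite Yeven ?mulr0 //; last by move: oa; case: (a).
  rewrite oddD -subnDA addnC oddB // oa oN; by case: (odd (i + j)) hp.
rewrite (bin_small (n := N - j)) ?muln0 ?mul0r ?mulr0 //.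
have := ltn_ord j; lia.
Qed.

Lemma Gsum a N : odd a -> odd N ->
  \sum_(j < N.+1) \sum_(i < N.+1) G a N j i = 0.
Proof.
move=> oa oN; set S := (X in X = 0).
have : S + S = 0.
  rewrite {2}/S exchange_big /= /S -big_split /=.
  apply: big1 => j _; rewrite -big_split /=; apply: big1 => i _.
  exact: Gpair.
by move/eqP; rewrite -mulr2n mulrn_eq0 /= => /eqP.
Qed.

Lemma widen0 n m (F : nat -> R) : (n <= m)%N -> (forall i, (n < i)%N -> F i = 0) ->
  \sum_(i < n.+1) F i = \sum_(i < m.+1) F i.
Proof.
move=> nm F0; rewrite (big_ord_widen m.+1 F) // big_mkcond; apply: eq_bigr => i _.
by case: ifP => // /negbT; rewrite -leqNgt => h; rewrite F0.
Qed.

Lemma mainsum a k : odd a -> odd k ->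
  \sum_(j < k.+2) 'C(k.+1, j)%:R * B j * mzeta_rev 1 [:: a] (k.+1 - j) = 0.
Proof.
move=> oa ok; set N := k.+2.
have HT : forall j : 'I_k.+2, 'C(k.+1, j)%:R * B j * mzeta_rev 1 [:: a] (k.+1 - j)
    = - (N%:R)^-1 * \sum_(i < N.+1) G a N j i.
  move=> j; rewrite Top.
  have jN : (j < N)%N := ltn_ord j.
  have e : (k.+1 - j).+1 = (N - j)%N by rewrite /N; lia.
  rewrite e (@widen0 (N - j) N (fun i => 'C(N - j, i)%:R * (-1) ^+ i * B i *
     mzeta_rev (1 : R) [::] ((a + (k.+1 - j)).+1 - i))); first last.
  - by move=> i hi; rewrite bin_small // mulr0n !mul0r.
  - exact: leq_subr.
  rewrite mulrA mulr_sumr mulr_sumr; apply: eq_bigr => i _.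
  case: (leqP i (N - j)) => hi; last first.
    by rewrite /G (bin_small hi) muln0 mulr0n !mul0r !mulr0.
  have ea : ((a + (k.+1 - j)).+1 - i = a + (N - j - i))%N by move: hi jN; rewrite /N; lia.
  have hb : (N * 'C(k.+1, j) = (N - j) * 'C(N, j))%N by rewrite -mul_bin_down.
  have hb' : 'C(k.+1, j)%:R = ((N - j) * 'C(N, j))%:R / N%:R :> R.
    by rewrite -hb natrM mulrAC mulfV ?mul1r // pnatr_eq0.
  have hNj : (N - j)%:R != 0 :> R by rewrite pnatr_eq0 -lt0n subn_gt0.
  rewrite /G /Y ea hb' !natrM; field.
  by rewrite hNj pnatr_eq0.
under eq_bigr => j _ do rewrite HT.
rewrite -mulr_sumr.
have oN : odd N by rewrite /N /= negbK.
have H0 : \sum_(i < N.+1) G a N N i = 0.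
  by apply: big1 => i _; rewrite /G bern_odd' // ?mul0r ?mulr0 ?mul0r.
have := Gsum oa oN; rewrite big_ord_recr /= H0 addr0 => ->.
by rewrite mulr0.
Qed.

Lemma sgnB j : (-1) ^+ j * B j = B j + (j == 1%N)%:R.
Proof.
case: j => [|[|j]].
- by rewrite expr0 mul1r addr0.
- by rewrite expr1 mulN1r bern1 opprK /=; field.
- by rewrite bern_sym // addr0.
Qed.

End S.

Unset Implicit Arguments.

Theorem proposition3p5 (R : numFieldType) (n1 n2 : nat) :
  mzeta [:: (2 * n1).+1; 0%N; (2 * n2).+1]%N (1 : R)
  = - mzeta [:: (2 * n1).+1; (2 * n2).+1]%N (1 : R).
Proof.
set a := (2 * n1).+1; set k := (2 * n2).+1.
have oa : odd a by rewrite /a /= oddM.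
have ok : odd k by rewrite /k /= oddM.
change (mzeta_rev (1:R) [:: 0%N; a] k = - mzeta_rev (1:R) [:: a] k).
rewrite Top add0n.
have := @mainsum R _ _ oa ok; move: (mzeta_rev (1:R) [:: a]) => f Hf.
under eq_bigr => j _ do rewrite -(mulrA _ ((-1) ^+ j)) sgnB mulrDr mulrDl.
rewrite big_split /= Hf add0r.
rewrite 2!big_ord_recl big1; last first.
  by move=> i _; rewrite (_ : (_ == 1%N) = false) ?mulr0 ?mul0r.
rewrite /= bin1 !mulr0 !mul0r add0r addr0 mulr1. rewrite bump0n.
by rewrite subSS subn0 mulrA mulNr mulVf ?mulN1r // pnatr_eq0.
Qed.
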